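(* Let $R\ge0$ and let $X$ be an $R$-rough geodesic metric space that is asymptotically $\mathrm{CAT}(0)$. Then $X$ is strongly shortcut.
   Context: A metric space is asymptotically $\mathrm{CAT}(0)$ if every asymptotic cone of it is $\mathrm{CAT}(0)$. Asymptotic cone: for a nonprincipal ultrafilter $\mathscr U$ on $\mathbb N$, basepoints $b^{(m)}\in X$ and scalars $s^{(m)}\to\infty$, take sequences $(x_m)$ with $d(x_m,b^{(m)})/s^{(m)}$ bounded, pseudometric $\lim_{\mathscr U} d(x_m,x'_m)/s^{(m)}$, and pass to the metric quotient. $X$ is $R$-rough geodesic if any $x_1,x_2$ are joined by $f\colon[0,\ell]\to X$, $\ell=d(x_1,x_2)$, $f(0)=x_1,f(\ell)=x_2$, with $|d(f(s),f(t))-|s-t||\le R$. An $R$-circle is a map $\alpha\colon S\to X$ from a Riemannian circle $S$ of length $|S|$ with $d(\alpha(p),\alpha(q))\le d_S(p,q)+R$; for $K>1$ it is $\frac1K$-almost isometric if $d(\alpha(p),\alpha(\bar p))\ge\frac1K\cdot\frac{|S|}2$ for all antipodal $p,\bar p\in S$. $X$ is strongly shortcut if for some $K>1$ there is a bound on the lengths of the $\frac1K$-almost isometric $R$-circles in $X$. *)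

(* Defs.v *)
From Stdlib Require Import Reals Lra ClassicalEpsilon.
Open Scope R_scope.

Definition is_metric {X : Type} (d : X -> X -> R) : Prop :=
  (forall x y, 0 <= d x y) /\
  (forall x y, d x y = 0 <-> x = y) /\
  (forall x y, d x y = d y x) /\
  (forall x y z, d x z <= d x y + d y z).

Definition rough_geodesic {X : Type} (d : X -> X -> R) (Rg : R) : Prop :=
  forall x1 x2 : X, exists f : R -> X,
    f 0 = x1 /\ f (d x1 x2) = x2 /\
    forall s t, 0 <= s <= d x1 x2 -> 0 <= t <= d x1 x2 ->
      Rabs (d (f s) (f t) - Rabs (s - t)) <= Rg.

Definition nonprincipal_ultrafilter (U : (nat -> Prop) -> Prop) : Prop :=
  U (fun _ => True) /\
  ~ U (fun _ => False) /\
  (forall A B, U A -> U B -> U (fun n => A n /\ B n)) /\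
  (forall A B : nat -> Prop, U A -> (forall n, A n -> B n) -> U B) /\
  (forall A, U A \/ U (fun n => ~ A n)) /\
  (forall k : nat, U (fun n => n <> k)).

Definition is_ulim (U : (nat -> Prop) -> Prop) (a : nat -> R) (L : R) : Prop :=
  forall eps, 0 < eps -> U (fun m => Rabs (a m - L) < eps).

(** The ultralimit (when it exists; it always exists for bounded sequences,
    which is the only case used below). *)
Definition ulim (U : (nat -> Prop) -> Prop) (a : nat -> R) : R :=
  match excluded_middle_informative (exists L, is_ulim U a L) with
  | left H => proj1_sig (constructive_indefinite_description _ H)
  | right _ => 0
  end.

(** Asymptotic cone: sequences (x_m) with d(x_m,b_m)/s_m bounded ... *)
Definition cone_seq {X : Type} (d : X -> X -> R) (b : nat -> X) (s : nat -> R) : Type :=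
  { x : nat -> X | exists C, forall m, d (x m) (b m) / s m <= C }.

(** ... with the pseudometric lim_U d(x_m,x'_m)/s_m ... *)
Definition cone_pd {X : Type} (d : X -> X -> R) (U : (nat -> Prop) -> Prop)
  (b : nat -> X) (s : nat -> R) (x y : cone_seq d b s) : R :=
  ulim U (fun m => d (proj1_sig x m) (proj1_sig y m) / s m).

(** ... and the metric quotient: points are the classes {y | pd x y = 0}. *)
Definition cone_pt {X : Type} (d : X -> X -> R) (U : (nat -> Prop) -> Prop)
  (b : nat -> X) (s : nat -> R) : Type :=
  { P : cone_seq d b s -> Prop | exists x, P = (fun y => cone_pd d U b s x y = 0) }.

Definition cone_rep {X : Type} {d : X -> X -> R} {U : (nat -> Prop) -> Prop}
  {b : nat -> X} {s : nat -> R} (P : cone_pt d U b s) : cone_seq d b s :=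
  proj1_sig (constructive_indefinite_description _ (proj2_sig P)).

Definition cone_dist {X : Type} (d : X -> X -> R) (U : (nat -> Prop) -> Prop)
  (b : nat -> X) (s : nat -> R) (P Q : cone_pt d U b s) : R :=
  cone_pd d U b s (cone_rep P) (cone_rep Q).

Definition geodesic_seg {Y : Type} (dY : Y -> Y -> R) (p q : Y) (g : R -> Y) : Prop :=
  g 0 = p /\ g (dY p q) = q /\
  forall s t, 0 <= s <= dY p q -> 0 <= t <= dY p q -> dY (g s) (g t) = Rabs (s - t).

Definition eucl (P Q : R * R) : R :=
  sqrt ((fst P - fst Q) ^ 2 + (snd P - snd Q) ^ 2).

Definition lin (A B : R * R) (l : R) : R * R :=
  (fst A + l * (fst B - fst A), snd A + l * (snd B - snd A)).

(** x is the point at parameter s of the geodesic side g from a to b, and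
    X is its comparison point on the comparison side [A,B]. *)
Definition on_side {Y : Type} (dY : Y -> Y -> R) (a b : Y) (g : R -> Y)
  (A B : R * R) (x : Y) (Xc : R * R) : Prop :=
  exists s, 0 <= s <= dY a b /\ x = g s /\ Xc = lin A B (s / dY a b).

Definition CAT0 {Y : Type} (dY : Y -> Y -> R) : Prop :=
  is_metric dY /\
  (forall p q : Y, exists g, geodesic_seg dY p q g) /\
  (forall (p q r : Y) (g1 g2 g3 : R -> Y),
     geodesic_seg dY p q g1 -> geodesic_seg dY q r g2 -> geodesic_seg dY r p g3 ->
     forall P Q Rr : R * R,
       eucl P Q = dY p q -> eucl Q Rr = dY q r -> eucl Rr P = dY r p ->
       let on_tri x Xc :=
         on_side dY p q g1 P Q x Xc \/ on_side dY q r g2 Q Rr x Xc \/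
         on_side dY r p g3 Rr P x Xc in
       forall x Xc y Yc, on_tri x Xc -> on_tri y Yc -> dY x y <= eucl Xc Yc).

Definition asymptotically_CAT0 {X : Type} (d : X -> X -> R) : Prop :=
  forall U : (nat -> Prop) -> Prop, nonprincipal_ultrafilter U ->
  forall (b : nat -> X) (s : nat -> R),
    (forall M, exists N : nat, forall m : nat, (N <= m)%nat -> M < s m) ->
    CAT0 (cone_dist d U b s).

(** Riemannian circle of length L > 0 modelled as [0,L) with
    d_S(p,q) = min(|p-q|, L-|p-q|); the antipode of p in [0,L/2) is p+L/2. *)
Definition circle_dist (L p q : R) : R := Rmin (Rabs (p - q)) (L - Rabs (p - q)).

Definition R_circle {X : Type} (d : X -> X -> R) (Rg L : R) (alpha : R -> X) : Prop :=
  forall p q, 0 <= p < L -> 0 <= q < L ->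
    d (alpha p) (alpha q) <= circle_dist L p q + Rg.

Definition almost_isometric {X : Type} (d : X -> X -> R) (K L : R) (alpha : R -> X) : Prop :=
  forall p, 0 <= p < L / 2 -> d (alpha p) (alpha (p + L / 2)) >= (1 / K) * (L / 2).

Definition strongly_shortcut {X : Type} (d : X -> X -> R) : Prop :=
  exists K, 1 < K /\
  forall Rg, 0 <= Rg -> exists B, forall (L : R) (alpha : R -> X),
    0 < L -> R_circle d Rg L alpha -> almost_isometric d K L alpha -> L <= B.

(* Main.v *)
Require Import Defs.
From Stdlib Require Import Reals Lra Lia Classical ClassicalEpsilon.
From mathcomp Require classical_sets filter.
Open Scope R_scope.


Lemma exists_npu : exists U, nonprincipal_ultrafilter U.
Proof.
  destruct (@filter.ultraFilterLemma nat filter.eventually filter.eventually_filter) as [G [HU Hsub]].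
  pose proof (@filter.ultra_proper _ _ HU) as HP.
  pose proof (@filter.filter_filter _ _ HP) as HF.
  exists G. unfold nonprincipal_ultrafilter.
  split; [exact (@filter.filterT _ _ HF)|].
  split; [exact (@filter.filter_not_empty _ G HP)|].
  split; [intros A B HA HB; exact (@filter.filterI _ _ HF A B HA HB)|].
  split; [intros A B HA HAB; exact (@filter.filterS _ _ HF A B HAB HA)|].
  split; [intros A; exact (@filter.in_ultra_setVsetC _ G A HU)|].
  intros k. apply Hsub. exists (S k). exact I. simpl. intros n Hn E. subst n.
  unfold classical_sets.mkset in Hn. rewrite ssrnat.ltnn in Hn. discriminate.
Qed.

Section UL.
Variable U : (nat -> Prop) -> Prop.
Hypothesis HU : nonprincipal_ultrafilter U.

Lemma U_mono (A B : nat -> Prop) : U A -> (forall n, A n -> B n) -> U B.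
Proof. destruct HU as [_ [_ [_ [H _]]]]. apply H. Qed.

Lemma U_and (A B : nat -> Prop) : U A -> U B -> U (fun n => A n /\ B n).
Proof. destruct HU as [_ [_ [H _]]]. apply H. Qed.

Lemma U_true (A : nat -> Prop) : (forall n, A n) -> U A.
Proof. intros H. apply (U_mono (fun _ => True)); auto. destruct HU; auto. Qed.

Lemma U_false (A : nat -> Prop) : U A -> (forall n, A n -> False) -> False.
Proof. intros H1 H2. destruct HU as [_ [H _]]. apply H. apply (U_mono A); auto. Qed.

Lemma U_compl (A : nat -> Prop) : U A \/ U (fun n => ~ A n).
Proof. destruct HU as [_ [_ [_ [_ [H _]]]]]. apply H. Qed.

Lemma U_ge (N : nat) : U (fun m => (N <= m)%nat).
Proof.
  induction N.
  - apply U_true. intros; lia.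
  - destruct HU as [_ [_ [_ [_ [_ H]]]]].
    apply (U_mono _ _ (U_and _ _ IHN (H N))). intros n [h1 h2]; lia.
Qed.

Lemma ulim_unique a L L' : is_ulim U a L -> is_ulim U a L' -> L = L'.
Proof.
  intros H1 H2. destruct (Req_dec L L') as [|Hne]; auto. exfalso.
  assert (He : 0 < Rabs (L - L') / 2) by (apply Rdiv_lt_0_compat; [apply Rabs_pos_lt; lra|lra]).
  apply (U_false _ (U_and _ _ (H1 _ He) (H2 _ He))). intros n [h1 h2].
  revert h1 h2. split_Rabs; lra.
Qed.

Lemma ulim_eq a L : is_ulim U a L -> ulim U a = L.
Proof.
  intros H. unfold ulim. destruct excluded_middle_informative as [e|n].
  - destruct (constructive_indefinite_description _ e) as [L' H']. simpl.
    eapply ulim_unique; eauto.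
  - exfalso. apply n. eauto.
Qed.

Lemma ulim_exists a C : U (fun m => Rabs (a m) <= C) -> is_ulim U a (ulim U a).
Proof.
  intros HC.
  assert (Hex : exists L, is_ulim U a L).
  { set (S := fun x => U (fun m => x <= a m)).
    assert (Hb : bound S).
    { exists C. intros x Hx. apply Rnot_lt_le. intro Hlt.
      apply (U_false _ (U_and _ _ Hx HC)). intros n [h1 h2].
      revert h2. split_Rabs; lra. }
    assert (Hne : exists x, S x).
    { exists (- C). apply (U_mono _ _ HC). intros n. split_Rabs; lra. }
    destruct (completeness S Hb Hne) as [L [HL1 HL2]].
    exists L. intros eps Heps.
    assert (H1 : exists x, S x /\ L - eps < x).
    { apply NNPP. intro Hn. assert (L <= L - eps); [|lra].
      apply HL2. intros x Hx. apply Rnot_lt_le. intro. apply Hn. eauto. }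
    destruct H1 as [x [Hx Hxl]].
    assert (H2 : U (fun m => a m < L + eps / 2)).
    { destruct (U_compl (fun m => L + eps / 2 <= a m)) as [h|h].
      - exfalso. assert (L + eps / 2 <= L) by (apply HL1; exact h). lra.
      - apply (U_mono _ _ h). intros n. lra. }
    apply (U_mono _ _ (U_and _ _ Hx H2)). intros n [h1 h2]. split_Rabs; lra. }
  destruct Hex as [L HL]. rewrite (ulim_eq _ _ HL). exact HL.
Qed.

Lemma ulim_le a L c : is_ulim U a L -> U (fun m => a m <= c) -> L <= c.
Proof.
  intros H1 H2. apply Rnot_lt_le. intro Hlt.
  assert (He : 0 < L - c) by lra.
  apply (U_false _ (U_and _ _ (H1 _ He) H2)). intros n [h1 h2]. revert h1. split_Rabs; lra.
Qed.

Lemma ulim_ge a L c : is_ulim U a L -> U (fun m => c <= a m) -> c <= L.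
Proof.
  intros H1 H2. apply Rnot_lt_le. intro Hlt.
  assert (He : 0 < c - L) by lra.
  apply (U_false _ (U_and _ _ (H1 _ He) H2)). intros n [h1 h2]. revert h1. split_Rabs; lra.
Qed.

End UL.

Section Cone.
Variable X : Type.
Variable d : X -> X -> R.
Hypothesis Hm : is_metric d.
Variable U : (nat -> Prop) -> Prop.
Hypothesis HU : nonprincipal_ultrafilter U.
Variable b : nat -> X.
Variable s : nat -> R.
Hypothesis Hs : forall m, 0 < s m.

Lemma div_le3 a1 a2 a3 a4 m : a1 <= a2 + a3 + a4 -> a1 / s m <= a2 / s m + a3 / s m + a4 / s m.
Proof.
  intros H. unfold Rdiv. rewrite <- !Rmult_plus_distr_r.
  apply Rmult_le_compat_r; auto. left; apply Rinv_0_lt_compat; auto.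
Qed.

Lemma div_nonneg a m : 0 <= a -> 0 <= a / s m.
Proof. intros. unfold Rdiv. apply Rmult_le_pos; auto. left; apply Rinv_0_lt_compat; auto. Qed.

Definition sq (x : cone_seq d b s) := proj1_sig x.

Lemma pd_spec (x y : cone_seq d b s) :
  is_ulim U (fun m => d (sq x m) (sq y m) / s m) (cone_pd d U b s x y).
Proof.
  destruct Hm as [Hpos [Hz [Hsym Htri]]].
  destruct x as [x [Cx HCx]]. destruct y as [y [Cy HCy]]. unfold cone_pd, sq; simpl.
  apply (ulim_exists U HU _ (Cx + Cy)). apply U_true; auto. intros m.
  rewrite Rabs_pos_eq by (apply div_nonneg; auto).
  specialize (HCx m). specialize (HCy m).
  assert (d (x m) (y m) / s m <= d (x m) (b m) / s m + d (y m) (b m) / s m + 0 / s m).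
  { apply div_le3. rewrite (Hsym (y m)). specialize (Htri (x m) (b m) (y m)). lra. }
  rewrite Rdiv_0_l in H. lra.
Qed.

Definition mkpt (x : cone_seq d b s) : cone_pt d U b s :=
  exist _ (fun y => cone_pd d U b s x y = 0) (ex_intro _ x eq_refl).

Lemma pd_self x : cone_pd d U b s x x = 0.
Proof.
  unfold cone_pd. apply ulim_eq; auto. intros eps He. apply U_true; auto. intros m.
  destruct Hm as [_ [Hz _]]. rewrite (proj2 (Hz _ _) eq_refl). rewrite Rdiv_0_l.
  rewrite Rminus_0_r, Rabs_R0. auto.
Qed.

Lemma rep_close x eps : 0 < eps ->
  U (fun m => d (sq (cone_rep (mkpt x)) m) (sq x m) / s m < eps).
Proof.
  intros He. unfold cone_rep.
  destruct (constructive_indefinite_description _ _) as [r Hr]. simpl.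
  simpl in Hr. pose proof (f_equal (fun P => P x) Hr) as E. simpl in E.
  assert (H0 : cone_pd d U b s r x = 0) by (rewrite <- E; apply pd_self).
  pose proof (pd_spec r x) as Hs1. rewrite H0 in Hs1.
  apply (U_mono U HU _ _ (Hs1 eps He)). intros n. split_Rabs; lra.
Qed.

Lemma cone_dist_le x y c :
  (forall eps, 0 < eps -> U (fun m => d (sq x m) (sq y m) / s m <= c + eps)) ->
  cone_dist d U b s (mkpt x) (mkpt y) <= c.
Proof.
  intros H. destruct Hm as [Hpos [Hz [Hsym Htri]]].
  assert (forall eps, 0 < eps -> cone_dist d U b s (mkpt x) (mkpt y) <= c + 3 * eps).
  { intros eps He. unfold cone_dist.
    apply (ulim_le U HU _ _ _ (pd_spec _ _)).
    apply (U_mono U HU _ _ (U_and U HU _ _ (H eps He) (U_and U HU _ _ (rep_close x eps He) (rep_close y eps He)))).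
    intros m [h1 [h2 h3]].
    set (r := sq (cone_rep (mkpt x)) m) in *. set (r' := sq (cone_rep (mkpt y)) m) in *.
    assert (d r r' / s m <= d r (sq x m) / s m + d (sq x m) (sq y m) / s m + d r' (sq y m) / s m).
    { apply div_le3. rewrite (Hsym r' (sq y m)).
      pose proof (Htri r (sq x m) r'). pose proof (Htri (sq x m) (sq y m) r'). lra. }
    lra. }
  apply Rnot_lt_le. intro Hlt.
  specialize (H0 ((cone_dist d U b s (mkpt x) (mkpt y) - c) / 4) ltac:(lra)). lra.
Qed.

Lemma cone_dist_ge x y c :
  (forall eps, 0 < eps -> U (fun m => c - eps <= d (sq x m) (sq y m) / s m)) ->
  c <= cone_dist d U b s (mkpt x) (mkpt y).
Proof.
  intros H. destruct Hm as [Hpos [Hz [Hsym Htri]]].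
  assert (forall eps, 0 < eps -> c - 3 * eps <= cone_dist d U b s (mkpt x) (mkpt y)).
  { intros eps He. unfold cone_dist.
    apply (ulim_ge U HU _ _ _ (pd_spec _ _)).
    apply (U_mono U HU _ _ (U_and U HU _ _ (H eps He) (U_and U HU _ _ (rep_close x eps He) (rep_close y eps He)))).
    intros m [h1 [h2 h3]].
    set (r := sq (cone_rep (mkpt x)) m) in *. set (r' := sq (cone_rep (mkpt y)) m) in *.
    assert (d (sq x m) (sq y m) / s m <= d r (sq x m) / s m + d r r' / s m + d r' (sq y m) / s m).
    { apply div_le3. rewrite (Hsym r (sq x m)).
      pose proof (Htri (sq x m) r (sq y m)). pose proof (Htri r r' (sq y m)). lra. }
    lra. }
  apply Rnot_lt_le. intro Hlt.
  specialize (H0 ((c - cone_dist d U b s (mkpt x) (mkpt y)) / 4) ltac:(lra)). lra.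
Qed.

End Cone.

Lemma cn {Y : Type} (dY : Y -> Y -> R) (HC : CAT0 dY) p h x g1 :
  geodesic_seg dY p h g1 -> 0 < dY p h ->
  dY (g1 (dY p h / 2)) x ^ 2 <= (dY p x ^ 2 + dY x h ^ 2) / 2 - dY p h ^ 2 / 4.
Proof.
  intros Hg1 HD.
  destruct HC as [Hm [Hgeo Hcmp]].
  pose proof Hm as [Hpos [Hzero [Hsym Htri]]].
  destruct (Hgeo h x) as [g2 Hg2]. destruct (Hgeo x p) as [g3 Hg3].
  rewrite (Hsym p x), (Hsym x h).
  assert (T1 : dY h x <= dY p h + dY x p).
  { pose proof (Htri h p x). rewrite (Hsym h p), (Hsym p x) in H. lra. }
  assert (T2 : dY p h <= dY x p + dY h x).
  { pose proof (Htri p x h). rewrite (Hsym p x), (Hsym x h) in H. lra. }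
  assert (T3 : dY x p <= dY h x + dY p h).
  { pose proof (Htri x h p). rewrite (Hsym x h), (Hsym h p) in H. lra. }
  pose proof (Hpos x p) as Pa. pose proof (Hpos h x) as Pb.
  set (D := dY p h) in *. set (a := dY x p) in *. set (bb := dY h x) in *.
  set (u := (D ^ 2 + a ^ 2 - bb ^ 2) / (2 * D)).
  assert (Hu : 2 * D * u = D ^ 2 + a ^ 2 - bb ^ 2) by (unfold u; field; lra).
  assert (Hua : u <= a).
  { apply Rmult_le_reg_l with (2 * D); [lra|]. rewrite Hu.
    assert (0 <= (bb - (D - a)) * (bb + (D - a))) by (apply Rmult_le_pos; lra). nra. }
  assert (Hua' : - a <= u).
  { apply Rmult_le_reg_l with (2 * D); [lra|]. rewrite Hu.
    assert (0 <= (D + a - bb) * (D + a + bb)) by (apply Rmult_le_pos; lra). nra. }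
  assert (Hv : 0 <= a ^ 2 - u ^ 2) by nra.
  set (v := sqrt (a ^ 2 - u ^ 2)).
  assert (Hv2 : v ^ 2 = a ^ 2 - u ^ 2) by (apply pow2_sqrt; auto).
  assert (E1 : eucl (0, 0) (D, 0) = D).
  { unfold eucl; simpl. replace ((0 - D) * ((0 - D) * 1) + (0 - 0) * ((0 - 0) * 1)) with (D ^ 2) by ring.
    apply sqrt_pow2; lra. }
  assert (E2 : eucl (D, 0) (u, v) = bb).
  { unfold eucl; simpl. replace ((D - u) * ((D - u) * 1) + (0 - v) * ((0 - v) * 1)) with (bb ^ 2) by nra.
    apply sqrt_pow2; lra. }
  assert (E3 : eucl (u, v) (0, 0) = a).
  { unfold eucl; simpl. replace ((u - 0) * ((u - 0) * 1) + (v - 0) * ((v - 0) * 1)) with (a ^ 2) by nra.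
    apply sqrt_pow2; lra. }
  pose proof (Hcmp p h x g1 g2 g3 Hg1 Hg2 Hg3 (0, 0) (D, 0) (u, v) E1 E2 E3) as Hc.
  cbv zeta in Hc.
  specialize (Hc (g1 (D / 2)) (lin (0, 0) (D, 0) ((D / 2) / D)) x (lin (u, v) (0, 0) (0 / a))).
  assert (Hl : dY (g1 (D / 2)) x <= eucl (lin (0, 0) (D, 0) ((D / 2) / D)) (lin (u, v) (0, 0) (0 / a))).
  { apply Hc.
    - left. exists (D / 2). split; [unfold D in *; lra|]. split; reflexivity.
    - right; right. exists 0. split; [unfold a in *; lra|]. split; [|reflexivity]. destruct Hg3 as [G _]. auto. }
  assert (Ee : eucl (lin (0, 0) (D, 0) ((D / 2) / D)) (lin (u, v) (0, 0) (0 / a)) =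
               sqrt ((a ^ 2 + bb ^ 2) / 2 - D ^ 2 / 4)).
  { rewrite Rdiv_0_l. unfold eucl, lin; simpl. f_equal.
    replace (D / 2 / D) with (/ 2) by (field; lra). simpl in Hv2, Hu. assert (Hvv : v * v = a * a - u * u) by lra. assert (Hdu : D * u = (D * D + a * a - bb * bb) / 2) by lra. replace ((0 + / 2 * (D - 0) - (u + 0 * (0 - u))) * ((0 + / 2 * (D - 0) - (u + 0 * (0 - u))) * 1) + (0 + / 2 * (0 - 0) - (v + 0 * (0 - v))) * ((0 + / 2 * (0 - 0) - (v + 0 * (0 - v))) * 1)) with (D * D / 4 - D * u + u * u + v * v) by field. rewrite Hvv, Hdu. field. }
  assert (HE : 0 <= (a ^ 2 + bb ^ 2) / 2 - D ^ 2 / 4).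
  { simpl in Hv2, Hu. assert (Hvv : v * v = a * a - u * u) by lra.
    assert (Hdu : D * u = (D * D + a * a - bb * bb) / 2) by lra.
    assert (HE' : (a ^ 2 + bb ^ 2) / 2 - D ^ 2 / 4 = (D / 2 - u) ^ 2 + v ^ 2).
    { simpl. replace ((D / 2 - u) * ((D / 2 - u) * 1) + v * (v * 1)) with (D * D / 4 - D * u + u * u + v * v) by field.
      rewrite Hvv, Hdu. field. }
    rewrite HE'. pose proof (pow2_ge_0 (D / 2 - u)). pose proof (pow2_ge_0 v). lra. }
  pose proof (pow2_sqrt _ HE). pose proof (sqrt_pos ((a ^ 2 + bb ^ 2) / 2 - D ^ 2 / 4)).
  pose proof (Hpos (g1 (D / 2)) x).
  nra.
Qed.

Lemma div_le a C sm : 0 < sm -> a <= C * sm -> a / sm <= C.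
Proof. intros H1 H2. replace C with (C * sm / sm) by (field; lra).
  unfold Rdiv. apply Rmult_le_compat_r; auto. left; apply Rinv_0_lt_compat; auto. Qed.

Lemma div_ge a C sm : 0 < sm -> C * sm <= a -> C <= a / sm.
Proof. intros H1 H2. replace C with (C * sm / sm) by (field; lra).
  unfold Rdiv. apply Rmult_le_compat_r; auto. left; apply Rinv_0_lt_compat; auto. Qed.

Lemma cd_le1 L p q : circle_dist L p q <= Rabs (p - q).
Proof. unfold circle_dist, Rmin. destruct Rle_dec; lra. Qed.
Lemma cd_le2 L p q : circle_dist L p q <= L - Rabs (p - q).
Proof. unfold circle_dist, Rmin. destruct Rle_dec; lra. Qed.
Lemma cd_half L p q : circle_dist L p q <= L / 2.
Proof. pose proof (cd_le1 L p q). pose proof (cd_le2 L p q). lra. Qed.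

Theorem theorem6p1 (X : Type) (d : X -> X -> R) (Rg : R) :
  is_metric d -> 0 <= Rg -> rough_geodesic d Rg -> asymptotically_CAT0 d ->
  strongly_shortcut d.
Proof.
  intros Hm HRg Hrg Hac.
  exists (5/4). split; [lra|]. intros R0 HR0.
  apply NNPP; intro Hno.
  assert (Hseq : forall n : nat, exists pa : R * (R -> X), 0 < fst pa /\
     R_circle d R0 (fst pa) (snd pa) /\ almost_isometric d (5/4) (fst pa) (snd pa) /\
     INR n + 1 < fst pa).
  { intro n. apply NNPP; intro Hn. apply Hno. exists (INR n + 1). intros L alpha HL Hc Ha.
    apply Rnot_lt_le; intro Hlt. apply Hn. exists (L, alpha); simpl; auto. }
  set (pf := fun n => proj1_sig (constructive_indefinite_description _ (Hseq n))).
  assert (Hpf : forall n, 0 < fst (pf n) /\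
     R_circle d R0 (fst (pf n)) (snd (pf n)) /\ almost_isometric d (5/4) (fst (pf n)) (snd (pf n)) /\
     INR n + 1 < fst (pf n)).
  { intro n. exact (proj2_sig (constructive_indefinite_description _ (Hseq n))). }
  destruct exists_npu as [U HU].
  set (s := fun m => fst (pf m)). set (al := fun m => snd (pf m)).
  set (b := fun m => al m 0).
  assert (Hs : forall m, 0 < s m) by (intro m; apply (Hpf m)).
  assert (Hs1 : forall m, INR m + 1 < s m) by (intro m; apply (Hpf m)).
  assert (Hcirc : forall m, R_circle d R0 (s m) (al m)) by (intro m; apply (Hpf m)).
  assert (Hai : forall m, almost_isometric d (5/4) (s m) (al m)) by (intro m; apply (Hpf m)).
  clearbody s al. clear Hpf pf Hseq.
  assert (Hs1' : forall m, 1 <= s m).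
  { intro m. pose proof (pos_INR m). specialize (Hs1 m). lra. }
  assert (Hinf : forall M, exists N : nat, forall m : nat, (N <= m)%nat -> M < s m).
  { intro M. destruct (INR_unbounded M) as [N HN]. exists N. intros m Hm'.
    apply le_INR in Hm'. specialize (Hs1 m). lra. }
  pose proof (Hac U HU b s Hinf) as HC.
  assert (Hok : forall t, 0 <= t < 1 -> exists C, forall m, d (al m (t * s m)) (b m) / s m <= C).
  { intros t Ht. exists (1/2 + R0). intro m. apply div_le; auto.
    pose proof (Hs m). pose proof (Hs1' m).
    assert (0 <= t * s m < s m) by nra.
    pose proof (Hcirc m (t * s m) 0 H1 ltac:(lra)).
    pose proof (cd_half (s m) (t * s m) 0). unfold b. nra. }
  set (xt := fun t (Ht : 0 <= t < 1) => exist (fun x : nat -> X => exists C, forall m, d (x m) (b m) / s m <= C)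
                (fun m => al m (t * s m)) (Hok t Ht)).
  assert (Hup : forall t u c (Ht : 0 <= t < 1) (Hu : 0 <= u < 1),
    (forall m, circle_dist (s m) (t * s m) (u * s m) <= c * s m) ->
    cone_dist d U b s (mkpt X d U b s (xt t Ht)) (mkpt X d U b s (xt u Hu)) <= c).
  { intros t u c Ht Hu Hcd. apply (cone_dist_le X d Hm U HU b s Hs).
    intros eps He. unfold sq, xt; simpl.
    destruct (INR_unbounded (R0 / eps)) as [N HN].
    apply (U_mono U HU _ _ (U_ge U HU N)). intros m HmN.
    apply le_INR in HmN. pose proof (Hs1 m). pose proof (Hs m).
    assert (R0 <= eps * s m).
    { assert (R0 = R0 / eps * eps) by (field; lra). nra. }
    apply div_le; auto.
    assert (0 <= t * s m < s m) by nra. assert (0 <= u * s m < s m) by nra.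
    pose proof (Hcirc m _ _ H2 H3). pose proof (Hcd m). nra. }
  assert (Hlow : forall t u c (Ht : 0 <= t < 1) (Hu : 0 <= u < 1),
    (forall m, c * s m <= d (al m (t * s m)) (al m (u * s m))) ->
    c <= cone_dist d U b s (mkpt X d U b s (xt t Ht)) (mkpt X d U b s (xt u Hu))).
  { intros t u c Ht Hu Hcd. apply (cone_dist_ge X d Hm U HU b s Hs).
    intros eps He. unfold sq, xt; simpl. apply (U_true U HU). intros m.
    pose proof (div_ge _ _ _ (Hs m) (Hcd m)). lra. }
  assert (H0 : 0 <= 0 < 1) by lra. assert (H1 : 0 <= 1/4 < 1) by lra.
  assert (H2 : 0 <= 1/2 < 1) by lra. assert (H3 : 0 <= 3/4 < 1) by lra.
  set (P0 := mkpt X d U b s (xt 0 H0)). set (Pq := mkpt X d U b s (xt (1/4) H1)).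
  set (Ph := mkpt X d U b s (xt (1/2) H2)). set (Pq' := mkpt X d U b s (xt (3/4) H3)).
  assert (D1 : cone_dist d U b s P0 Pq <= 1/4).
  { apply Hup. intro m. pose proof (cd_le1 (s m) (0 * s m) (1/4 * s m)). pose proof (Hs m).
    revert H. split_Rabs; lra. }
  assert (D2 : cone_dist d U b s Pq Ph <= 1/4).
  { apply Hup. intro m. pose proof (cd_le1 (s m) (1/4 * s m) (1/2 * s m)). pose proof (Hs m).
    revert H. split_Rabs; lra. }
  assert (D3 : cone_dist d U b s P0 Pq' <= 1/4).
  { apply Hup. intro m. pose proof (cd_le2 (s m) (0 * s m) (3/4 * s m)). pose proof (Hs m).
    revert H. split_Rabs; lra. }
  assert (D4 : cone_dist d U b s Pq' Ph <= 1/4).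
  { apply Hup. intro m. pose proof (cd_le1 (s m) (3/4 * s m) (1/2 * s m)). pose proof (Hs m).
    revert H. split_Rabs; lra. }
  assert (D5 : 2/5 <= cone_dist d U b s P0 Ph).
  { apply Hlow. intro m. pose proof (Hs m).
    assert (0 <= 0 < s m / 2) by lra.
    pose proof (Hai m 0 H4).
    replace (0 * s m) with 0 by ring. replace (1/2 * s m) with (0 + s m / 2) by field.
    apply Rge_le in H5. replace (1 / (5/4) * (s m / 2)) with (2/5 * s m) in H5 by field. exact H5. }
  assert (D6 : 2/5 <= cone_dist d U b s Pq Pq').
  { apply Hlow. intro m. pose proof (Hs m).
    assert (0 <= s m / 4 < s m / 2) by lra.
    pose proof (Hai m _ H4).
    replace (1/4 * s m) with (s m / 4) by field. replace (3/4 * s m) with (s m / 4 + s m / 2) by field.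
    apply Rge_le in H5. replace (1 / (5/4) * (s m / 2)) with (2/5 * s m) in H5 by field. exact H5. }
  clearbody P0 Pq Ph Pq'.
  pose proof HC as [Hcm [Hgeo _]].
  destruct Hcm as [Cpos [_ [Csym Ctri]]].
  destruct (Hgeo P0 Ph) as [g1 Hg1].
  assert (HD : 0 < cone_dist d U b s P0 Ph) by lra.
  pose proof (cn _ HC P0 Ph Pq g1 Hg1 HD) as C1.
  pose proof (cn _ HC P0 Ph Pq' g1 Hg1 HD) as C2.
  set (M := g1 (cone_dist d U b s P0 Ph / 2)) in *.
  set (D := cone_dist d U b s P0 Ph) in *.
  pose proof (Cpos P0 Pq). pose proof (Cpos Pq Ph). pose proof (Cpos P0 Pq'). pose proof (Cpos Pq' Ph).
  pose proof (Cpos M Pq). pose proof (Cpos M Pq').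
  assert (E1 : cone_dist d U b s M Pq <= 3/20) by nra.
  assert (E2 : cone_dist d U b s M Pq' <= 3/20) by nra.
  pose proof (Ctri Pq M Pq'). rewrite (Csym Pq M) in H9. lra.
Qed.
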